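(* Let $\mathcal{O}$ be a cube orientation. If $\mathcal{O}$ has property L (i.e., every L-graph $\mathcal{L}_{\mathcal{O}}(V)$, $V\in\mathrm{vert}\,\mathcal{O}$, is acyclic), then $\mathcal{O}$ is a unique sink orientation.
   Context: For sets $U,V$ let $U\oplus V=(U\cup V)\setminus(U\cap V)$, and for $U\subseteq W$ let $[U,W]=\{V: U\subseteq V\subseteq W\}$. A cube orientation is a directed graph $\mathcal{O}$ with vertex set $\mathrm{vert}\,\mathcal{O}=[U,W]$ for some $U\subseteq W$ which, for every $V\in[U,W]$ and every $i\in W\setminus U$ (the carrier), contains exactly one of the directed edges $(V,V\oplus\{i\})$ and $(V\oplus\{i\},V)$. Its outmap is $\phi_{\mathcal{O}}(V)=\{i\in W\setminus U: (V,V\oplus\{i\})\in\mathcal{O}\}$. For $V\in[U,W]$, the L-graph $\mathcal{L}_{\mathcal{O}}(V)$ is the directed graph with vertex set $W\setminus V$ and an arc $(i,j)$ for distinct $i,j\in W\setminus V$ whenever $j\in\phi_{\mathcal{O}}(V)\oplus\phi_{\mathcal{O}}(V\cup\{i\})$. $\mathcal{O}$ has property L if all its L-graphs are acyclic. A face of $\mathcal{O}$ is the subgraph induced by an interval contained in $\mathrm{vert}\,\mathcal{O}$; $\mathcal{O}$ is a unique sink orientation (USO) if every face has exactly one sink (vertex with no outgoing edge in the face). *)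

(* Defs.v *)
From mathcomp Require Import all_boot.
Set Implicit Arguments. Unset Strict Implicit. Unset Printing Implicit Defensive.

Section CubeOrientations.
Variable T : finType.

Definition symdiff (A B : {set T}) : {set T} := (A :|: B) :\: (A :&: B).

Definition interval (U W : {set T}) : {set {set T}} :=
  [set V : {set T} | (U \subset V) && (V \subset W)].

Definition cube_orientation (e : rel {set T}) (U W : {set T}) : Prop :=
  [/\ U \subset W,
      (forall A B : {set T}, e A B ->
         [/\ A \in interval U W, B \in interval U W &
             exists2 i, i \in W :\: U & B = symdiff A [set i]]) &
      (forall (V : {set T}) (i : T), V \in interval U W -> i \in W :\: U ->
         e V (symdiff V [set i]) (+) e (symdiff V [set i]) V)].

Definition outmap (e : rel {set T}) (U W V : {set T}) : {set T} :=
  [set i in W :\: U | e V (symdiff V [set i])].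

Definition Lgraph (e : rel {set T}) (U W V : {set T}) : rel T :=
  fun i j : T => [&& i != j, i \in W :\: V, j \in W :\: V &
                 j \in symdiff (outmap e U W V) (outmap e U W (V :|: [set i]))].

Definition acyclic (r : rel T) : Prop :=
  forall s : seq T, s != [::] -> ~~ cycle r s.

Definition property_L (e : rel {set T}) (U W : {set T}) : Prop :=
  forall V, V \in interval U W -> acyclic (Lgraph e U W V).

Definition sink_in_face (e : rel {set T}) (A B V : {set T}) : bool :=
  (V \in interval A B) && [forall X in interval A B, ~~ e V X].

Definition USO (e : rel {set T}) (U W : {set T}) : Prop :=
  forall A B : {set T}, U \subset A -> A \subset B -> B \subset W ->
    #|[set V | sink_in_face e A B V]| = 1.

End CubeOrientations.

(* Main.v *)
Require Import Defs.
From mathcomp Require Import all_boot.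
Set Implicit Arguments. Unset Strict Implicit. Unset Printing Implicit Defensive.

Section Proof.
Variable T : finType.
Implicit Types A B C V X Y Z : {set T}.

Lemma in_symdiff A B x : (x \in symdiff A B) = (x \in A) (+) (x \in B).
Proof. by rewrite /symdiff !inE; case: (x \in A); case: (x \in B). Qed.

Lemma symdiffK A i : symdiff (symdiff A [set i]) [set i] = A.
Proof. by apply/setP => x; rewrite !in_symdiff -addbA addbb addbF. Qed.

Lemma in_interval A B V : (V \in interval A B) = (A \subset V) && (V \subset B).
Proof. by rewrite inE. Qed.

Lemma symdiff0 A B : symdiff A B = set0 -> A = B.
Proof.
move=> H; apply/setP => x; move/setP: H => /(_ x).
by rewrite in_symdiff inE; case: (x \in A); case: (x \in B).
Qed.

Lemma card_interval A B : A \subset B -> #|interval A B| = 2 ^ #|B :\: A|.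
Proof.
move=> AB; rewrite -card_powerset.
have -> : interval A B = (fun Y => A :|: Y) @: powerset (B :\: A).
  apply/setP => V; rewrite in_interval; apply/idP/imsetP.
    case/andP => AV VB; exists (V :\: A).
      by rewrite inE; apply: setSD.
    apply/setP => x; rewrite !inE; case: (boolP (x \in A)) => //= xA.
    by rewrite (subsetP AV).
  case=> Y; rewrite inE => YBA ->; rewrite subsetUl /= subUset AB /=.
  exact: subset_trans YBA (subsetDl _ _).
apply: card_in_imset => Y1 Y2; rewrite !inE => H1 H2 E.
apply/setP => x; move/setP: E => /(_ x); rewrite !inE.
case: (boolP (x \in A)) => //= xA.
have := subsetP H1 x; have := subsetP H2 x; rewrite !inE xA /=.
case: (x \in Y1); case: (x \in Y2) => // h1 h2; first [by have := h2 isT | by have := h1 isT].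
Qed.


Lemma in_sym1 V i x : (x \in symdiff V [set i]) = (x \in V) (+) (x == i).
Proof. by rewrite in_symdiff inE. Qed.

Lemma sym1_interval A B V i : V \in interval A B -> i \in B :\: A ->
  symdiff V [set i] \in interval A B.
Proof.
rewrite !in_interval inE => /andP[AV VB] /andP[iA iB].
apply/andP; split; apply/subsetP => x; rewrite ?in_sym1.
  move=> xA; rewrite (subsetP AV) //=; apply/negP => /eqP xi.
  by rewrite -xi xA in iA.
case: (boolP (x == i)) => [/eqP -> | _]; first by rewrite iB.
by rewrite addbF; apply: (subsetP VB).
Qed.

Variables (e : rel {set T}) (U W : {set T}).
Hypothesis Hco : cube_orientation e U W.
Hypothesis HL : property_L e U W.
Local Notation phi := (outmap e U W).
Local Notation I := (interval U W).

Lemma phiE V i : (i \in phi V) = (i \in W :\: U) && e V (symdiff V [set i]).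
Proof. by rewrite inE. Qed.

Lemma flip V i : V \in I -> i \in W :\: U ->
  (i \in phi V) (+) (i \in phi (symdiff V [set i])).
Proof.
move=> HV Hi; rewrite !phiE Hi symdiffK /=.
by case: Hco => _ _ /(_ V i HV Hi).
Qed.

Lemma sinkE A B V : U \subset A -> A \subset B -> B \subset W ->
  sink_in_face e A B V = (V \in interval A B) && (phi V :&: (B :\: A) == set0).
Proof.
move=> UA AB BW; rewrite /sink_in_face; case VAB: (V \in interval A B) => //=.
apply/forallP/eqP.
  move=> H; apply/setP => i; rewrite !inE; apply/negbTE; apply/negP.
  case/andP=> /andP[iWU eVi] iBA.
  move: (H (symdiff V [set i])); rewrite sym1_interval //=; last by rewrite inE.
  by rewrite eVi.
move=> H X; apply/implyP => XAB; apply/negP => eVX.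
case: Hco => _ /(_ V X eVX) [VI XI [i iWU XE]] _.
have iBA : i \in B :\: A.
  move: VAB XAB; rewrite !in_interval XE => /andP[AV VB] /andP[AX XB].
  rewrite inE; apply/andP; split.
    apply/negP => iA; have := subsetP AX i iA; have := subsetP AV i iA.
    by rewrite in_sym1 eqxx => ->.
  case: (boolP (i \in V)) => iV; first exact: (subsetP VB).
  by apply: (subsetP XB); rewrite in_sym1 eqxx (negbTE iV).
move/setP: H => /(_ i); rewrite !inE -XE eVX.
by move: iWU iBA; rewrite !inE => -> ->.
Qed.


Lemma sym_in_face A B X Y k : X \in interval A B -> Y \in interval A B ->
  k \in symdiff X Y -> k \in B :\: A.
Proof.
rewrite !in_interval in_symdiff => /andP[AX XB] /andP[AY YB] kXY.
rewrite inE; apply/andP; split.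
  by apply/negP => kA; move: kXY; rewrite (subsetP AX) ?(subsetP AY).
by case: (boolP (k \in X)) kXY => kX; [rewrite (subsetP XB) | move=> /= /(subsetP YB)].
Qed.

Definition good X Y := exists2 k, k \in symdiff X Y & k \in symdiff (phi X) (phi Y).

Lemma count_face A B : A \subset B ->
  (forall X Y, X \in interval A B -> Y \in interval A B -> X != Y -> good X Y) ->
  forall C, C \subset B :\: A ->
  #|[set Z in interval A B | phi Z :&: (B :\: A) == C]| = 1.
Proof.
move=> AB H C CBA.
pose g Z := phi Z :&: (B :\: A).
have ginj : {in interval A B &, injective g}.
  move=> X Y HX HY E; apply/eqP; apply/negPn/negP => XY.
  case: (H X Y HX HY XY) => k kXY kphi.
  have kBA := sym_in_face HX HY kXY.
  move/setP: E => /(_ k); rewrite /g !in_setI kBA !andbT => E.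
  by move: kphi; rewrite in_symdiff E; case: (k \in phi Y).
have img : g @: interval A B = powerset (B :\: A).
  apply/eqP; rewrite eqEcard; apply/andP; split.
    by apply/subsetP => _ /imsetP[Z _ ->]; rewrite inE subsetIr.
  by rewrite card_in_imset // card_interval // card_powerset.
have : C \in g @: interval A B by rewrite img inE.
case/imsetP => Z HZ CE.
have -> : [set Z in interval A B | phi Z :&: (B :\: A) == C] = [set Z].
  apply/setP => Z'; rewrite in_set in_set1; apply/andP/eqP.
    by case=> HZ' /eqP E; apply: ginj => //; rewrite /g E.
  by move=> ->; rewrite HZ CE.
exact: cards1.
Qed.


Lemma in_G0 A B Z j : (Z \in interval A (B :\ j)) = (Z \in interval A B) && (j \notin Z).
Proof. by rewrite !in_interval subsetD1 andbA. Qed.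

Lemma in_G1 A B Z j : j \in B ->
  (Z \in interval (j |: A) B) = (Z \in interval A B) && (j \in Z).
Proof.
by move=> jB; rewrite !in_interval subUset sub1set; case: (j \in Z); rewrite ?andbT ?andbF.
Qed.

Lemma setD1_eq (A' C : {set T}) (j : T) :
  (A' :\ j == C :\ j) = (A' == C) || (A' == symdiff C [set j]).
Proof.
apply/idP/idP.
  move/eqP/setP => E.
  case: (boolP ((j \in A') == (j \in C))) => /eqP Hj.
    apply/orP; left; apply/eqP/setP => x; case: (boolP (x == j)) => [/eqP -> //|xj].
    by move: (E x); rewrite !inE xj.
  apply/orP; right; apply/eqP/setP => x; rewrite in_sym1.
  case: (boolP (x == j)) => [/eqP -> |xj]; last by move: (E x); rewrite !inE xj addbF.
  by move: Hj; case: (j \in A'); case: (j \in C).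
case/orP => /eqP ->; first by [].
apply/eqP/setP => x; rewrite !in_setD1 in_sym1; case: (x == j) => //=.
by rewrite addbF.
Qed.


Lemma find_cycle (r : rel T) (D : {set T}) (x0 : T) : x0 \in D ->
  (forall i, i \in D -> exists2 j, j \in D & r i j) ->
  exists2 s : seq T, s != [::] & cycle r s.
Proof.
move=> x0D H.
pose f i := odflt i [pick j in D | r i j].
have fD i : i \in D -> f i \in D /\ r i (f i).
  move=> iD; rewrite /f; case: pickP => [j /andP[jD rij] | N] //=.
  by case: (H i iD) => j jD rij; move: (N j); rewrite jD rij.
have iter_in k i : i \in D -> iter k f i \in D.
  by elim: k => //= k IHk iD; exact: (fD _ (IHk iD)).1.
pose z := iter (order f x0) f x0.
have : looping f x0 (order f x0) by apply: looping_order.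
rewrite /looping => /trajectP[i iord zi].
have zcyc : fcycle f (orbit f z).
  apply/(orbitPcycle 0 3); exists (order f x0 - i).-1.
  rewrite prednK ?subn_gt0 // /z {1}zi -iterD subnK ?(ltnW iord) //.
exists (orbit f z); first by apply/eqP => E; have := in_orbit f z; rewrite E.
apply: (@sub_in_cycle _ (fun x => x \in D) (frel f)) zcyc.
  move=> a b aD _; rewrite /frel /= => /eqP <-; exact: (fD a aD).2.
apply/allP => y /trajectP[k _ ->]; exact: (iter_in k _ (iter_in _ _ x0D)).
Qed.


Lemma SW n : forall X Y, #|symdiff X Y| <= n -> X \in I -> Y \in I -> X != Y -> good X Y.
Proof.
elim: n => [|n IH] X Y.
  by rewrite leqn0 cards_eq0 => /eqP/symdiff0 ->; rewrite eqxx.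
move=> Hc XI YI XY.
case: (leqP #|symdiff X Y| n) => Hn; first exact: IH.
case: (boolP [exists k, (k \in symdiff X Y) && (k \in symdiff (phi X) (phi Y))]).
  by case/existsP => k /andP[k1 k2]; exists k.
move=> Hng; exfalso.
have hD : forall k, k \in symdiff X Y -> (k \in phi X) = (k \in phi Y).
  move=> k kD; move/existsPn: Hng => /(_ k); rewrite kD in_symdiff /=.
  by case: (k \in phi X); case: (k \in phi Y).
have cardD : #|symdiff X Y| = n.+1 by apply/eqP; rewrite eqn_leq Hc Hn.
set D := symdiff X Y in hD cardD Hc Hn.
set S := X :&: Y. set Top := X :|: Y.
move: XI YI; rewrite !in_interval => /andP[UX XW] /andP[UY YW].
have US : U \subset S by rewrite subsetI UX UY.
have TW : Top \subset W by rewrite subUset XW YW.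
have ST : S \subset Top by apply: subset_trans (subsetIl _ _) (subsetUl _ _).
have TSD : Top :\: S = D.
  by [].
pose F := interval S Top.
have FI Z : Z \in F -> Z \in I.
  rewrite !in_interval => /andP[SZ ZT].
  by rewrite (subset_trans US SZ) (subset_trans ZT TW).
have XF : X \in F by rewrite in_interval subsetIl subsetUl.
have YF : Y \in F by rewrite in_interval subsetIr subsetUr.
pose N C := #|[set Z in F | phi Z :&: D == C]|.
have Nsum j C : j \in D -> C \subset D -> N C + N (symdiff C [set j]) = 2.
  move=> jD CD.
  have jT : j \in Top by move: jD; rewrite -TSD inE => /andP[].
  have cDj : #|D :\ j| = n by move: cardD; rewrite (cardsD1 j) jD add1n => [[]].
  have G0c : (Top :\ j) :\: S = D :\ j.
    by rewrite -TSD; apply/setP => x; rewrite !inE; case: (x \in X); case: (x \in Y); case: (x == j).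
  have G1c : Top :\: (j |: S) = D :\ j.
    by rewrite -TSD; apply/setP => x; rewrite !inE; case: (x \in X); case: (x \in Y); case: (x == j).
  have IHG A B : (forall Z, Z \in interval A B -> Z \in F) -> B :\: A = D :\ j ->
      forall P Q, P \in interval A B -> Q \in interval A B -> P != Q -> good P Q.
    move=> sub BA P Q HP HQ PQ; apply: IH; rewrite ?FI ?sub //.
    rewrite -cDj -BA; apply: subset_leq_card; apply/subsetP => k.
    exact: sym_in_face.
  have CDj : C :\ j \subset D :\ j by apply: setSD.
  have jS : j \notin S by move: jD; rewrite -TSD inE => /andP[].
  have sub0 Z : Z \in interval S (Top :\ j) -> Z \in F by rewrite in_G0 => /andP[].
  have sub1 Z : Z \in interval (j |: S) Top -> Z \in F by rewrite in_G1 // => /andP[].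
  have S0 : S \subset Top :\ j by rewrite subsetD1 ST jS.
  have S1 : j |: S \subset Top by rewrite subUset sub1set jT ST.
  have c0 := @count_face S (Top :\ j) S0 (IHG _ _ sub0 G0c) (C :\ j).
  rewrite G0c in c0; have {}c0 := c0 CDj.
  have c1 := @count_face (j |: S) Top S1 (IHG _ _ sub1 G1c) (C :\ j).
  rewrite G1c in c1; have {}c1 := c1 CDj.
  set P0 := [set Z in interval S (Top :\ j) | _] in c0.
  set P1 := [set Z in interval (j |: S) Top | _] in c1.
  set Q0 := [set Z in F | phi Z :&: D == C].
  set Q1 := [set Z in F | phi Z :&: D == symdiff C [set j]].
  have E : Q0 :|: Q1 = P0 :|: P1.
    apply/setP => Z; rewrite !in_setU !in_set subsetD1 subUset sub1set setIDA setD1_eq.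
    case: (S \subset Z); case: (Z \subset Top); case: (j \in Z);
      case: (phi Z :&: D == C); case: (phi Z :&: D == symdiff C [set j]) => //.
  have dQ : Q0 :&: Q1 = set0.
    apply/setP => Z; rewrite in_setI !in_set ?in_set0.
    apply/negbTE; apply/negP => /andP[/andP[_ /eqP ->] /andP[_ /eqP E']].
    move/setP: E' => /(_ j); rewrite in_sym1 eqxx addbT.
    by case: (j \in C).
  have dP : P0 :&: P1 = set0.
    apply/setP => Z; rewrite in_setI !in_set ?in_set0 subsetD1 subUset sub1set.
    by case: (j \in Z); rewrite ?andbF ?andFb //= !andbF.
  rewrite /N -/Q0 -/Q1.
  have := cardsUI Q0 Q1; rewrite dQ cards0 addn0 E => <-.
  by have := cardsUI P0 P1; rewrite dP cards0 addn0 c0 c1.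
have DT k : k \in D -> (k \notin S) && (k \in Top) by rewrite -TSD inE.
have CsubD C : phi C :&: D \subset D by apply: subsetIr.
have Nall (c0 : {set T}) : c0 \subset D -> N c0 = 1 -> forall m C, C \subset D ->
    #|symdiff C c0| <= m -> N C = 1.
  move=> c0D Nc0; elim=> [|m IHm] C CD.
    by rewrite leqn0 cards_eq0 => /eqP/symdiff0 ->.
  move=> Hm; case: (leqP #|symdiff C c0| m) => Hm'; first exact: IHm.
  have [j jC] : exists j, j \in symdiff C c0 by apply/card_gt0P; apply: leq_ltn_trans Hm'.
  have jD : j \in D.
    by move: jC; rewrite in_symdiff; case: (boolP (j \in C)) => jC' /=;
      [rewrite (subsetP CD) | move/(subsetP c0D)].
  have C'D : symdiff C [set j] \subset D.
    apply/subsetP => x; rewrite in_sym1; case: (boolP (x == j)) => [/eqP -> //|_].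
    by rewrite addbF; apply: (subsetP CD).
  have E : symdiff (symdiff C [set j]) c0 = symdiff C c0 :\ j.
    apply/setP => x; rewrite in_setD1 !in_symdiff in_set1.
    case: (boolP (x == j)) => [/eqP -> | _] /=; last by rewrite addbF.
    by move: jC; rewrite in_symdiff; case: (j \in C); case: (j \in c0).
  have NC' : N (symdiff C [set j]) = 1.
    apply: IHm => //; rewrite E.
    have := Hm; rewrite (cardsD1 j) jC add1n ltnS; done.
  have := Nsum j _ jD C'D; rewrite symdiffK NC'; by case.
have arcs i : i \in D -> exists2 j, j \in D & Lgraph e U W S i j.
  move=> iD.
  case: (boolP [exists j, (j \in D) && Lgraph e U W S i j]).
    by case/existsP => j /andP[j1 j2]; exists j.
  move/existsPn => Hnj; exfalso.
  have /andP[iS iT] := DT i iD.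
  have iWU : i \in W :\: U.
    rewrite inE (subsetP TW) // andbT; apply/negP => iU.
    by move: iS; rewrite (subsetP US).
  have SiE : S :|: [set i] = symdiff S [set i].
    apply/setP => x; rewrite in_sym1 in_setU in_set1.
    case: (boolP (x == i)) => [/eqP -> | _]; first by rewrite (negbTE iS).
    by rewrite orbF addbF.
  have SI : S \in I by apply: FI; rewrite in_interval subxx ST.
  have SiF : symdiff S [set i] \in F.
    by rewrite sym1_interval // ?in_interval ?subxx ?ST // inE iS.
  have key : phi (symdiff S [set i]) :&: D = symdiff (phi S :&: D) [set i].
    apply/setP => x; rewrite in_sym1 !in_setI.
    case: (boolP (x == i)) => [/eqP -> | xi].
      rewrite iD !andbT; move: (flip SI iWU).
      by case: (i \in phi S); case: (i \in phi (symdiff S [set i])).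
    rewrite addbF; case: (boolP (x \in D)) => xD; rewrite ?andbF ?andbT //.
    move: (Hnj x); rewrite xD /= /Lgraph SiE eq_sym xi /=.
    have /andP[xS xT] := DT x xD.
    rewrite !in_setD iS xS (subsetP TW _ iT) (subsetP TW _ xT) /= in_setI in_setU.
    by case: (x \in phi S); case: (x \in phi (symdiff S [set i])).
  set c0 := phi S :&: D.
  have N0 : 0 < N c0.
    by apply/card_gt0P; exists S; rewrite in_set in_interval subxx ST /=.
  have N1 : 0 < N (symdiff c0 [set i]).
    by apply/card_gt0P; exists (symdiff S [set i]); rewrite in_set -key SiF /=.
  have Nc0 : N c0 = 1.
    move: (Nsum i c0 iD (CsubD S)) N0 N1.
    by case: (N c0) => [|[|[|k]]] //; case: (N (symdiff c0 [set i])) => [|[|k]].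
  have NX := Nall c0 (CsubD S) Nc0 _ _ (CsubD X) (leqnn _).
  have E : phi X :&: D = phi Y :&: D.
    apply/setP => k; rewrite !in_setI; case: (boolP (k \in D)) => kD;
      by rewrite ?andbT ?andbF ?hD.
  have : 2 <= N (phi X :&: D).
    have c2 := cards2 X Y; rewrite XY in c2; rewrite -c2; apply: subset_leq_card; apply/subsetP => Z.
    rewrite !inE => /orP[] /eqP ->; rewrite ?E eqxx andbT; [move: XF | move: YF]; by rewrite in_interval.
  by rewrite NX.
have [x0 x0D] : exists x0, x0 \in D.
  by apply/card_gt0P; rewrite cardD.
have [s sn sc] := find_cycle x0D arcs.
have SI : S \in I by apply: FI; rewrite in_interval subxx ST.
by move: (HL SI sn); rewrite sc.
Qed.


Lemma uso : USO e U W.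
Proof.
move=> A B UA AB BW.
have sub Z : Z \in interval A B -> Z \in I.
  rewrite !in_interval => /andP[AZ ZB].
  by rewrite (subset_trans UA AZ) (subset_trans ZB BW).
have HSW X Y : X \in interval A B -> Y \in interval A B -> X != Y -> good X Y.
  by move=> HX HY; apply: (@SW _ X Y (leqnn _)); apply: sub.
have := count_face AB HSW (sub0set _).
move=> <-; apply: eq_card => V.
by rewrite !in_set sinkE // in_interval.
Qed.

End Proof.

Theorem theorem3p3 (T : finType) (e : rel {set T}) (U W : {set T}) :
  cube_orientation e U W -> property_L e U W -> USO e U W.
Proof. move=> Hco HL; exact: uso. Qed.
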